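(* Let $g$, $\mathbf{g}=g^{\oplus n}$ be as in the context, and let $\mathbf{A},\mathbf{B},\mathbf{C},\mathbf{D}$ be linear operators on $\mathbf{g}$ with components $A_{ij},B_{ij},C_{ij},D_{ij}$ such that $A_{ij}^*=-A_{ji}$, $D_{ij}^*=-D_{ji}$, $B_{ij}^*=C_{ji}$ and such that PB$(\mathbf{A},\mathbf{B},\mathbf{C},\mathbf{D})$ is a Poisson bracket on $\mathbf{g}$. All subscripts are taken mod $n$. Suppose (i) $A_{i+1,j+1}=-B_{i+1,j}=C_{i,j+1}=-D_{i,j}$ for all $i\neq j$; (ii) $A_{j+1,j+1}-D_{j,j}+B_{j+1,j}-C_{j,j+1}=0$ for all $1\le j\le n$. Let $\sigma:\mathbf{g}\to\mathbf{g}$, $\sigma(u_1,\dots,u_n)=(u_2,\dots,u_n,u_1)$, let $\mathcal{M}(u_1,\dots,u_n)=u_n\cdots u_1$, and $T_j=u_j\cdots u_1\cdot u_n\cdots u_{j+1}$ (so $\mathcal{M}\circ\sigma^j(\mathbf{u})=T_j$, $T_0=T_n=\mathcal{M}(\mathbf{u})$). Then: (1) for each $j$, the map $\mathcal{M}\circ\sigma^j:\mathbf{g}\to g$ is Poisson when $g$ carries the bracket PB$(A_{j+1,j+1},B_{j+1,j},C_{j,j+1},D_{j,j})$, i.e. $\{\varphi\circ\mathcal{M}\circ\sigma^j,\psi\circ\mathcal{M}\circ\sigma^j\}_{\mathbf{g}}=\{\varphi,\psi\}_g\circ\mathcal{M}\circ\sigma^j$ for all smooth $\varphi,\psi$ on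 $g$; (2) for every smooth Ad-invariant $\varphi$ on $g$, the Hamiltonian equations on $\mathbf{g}$ generated by $\Phi(\mathbf{u})=\varphi(u_n\cdots u_1)$ are $\dot u_j=u_j\,\mathcal{L}_{j-1}-\mathcal{L}_j\,u_j$ with $\mathcal{L}_j=R_j(d\varphi(T_j))$, where $R_j=A_{j+1,j+1}+B_{j+1,j}=D_{j,j}+C_{j,j+1}$.
   Context: $g$ is an associative algebra with a nondegenerate symmetric bilinear form $\langle\cdot,\cdot\rangle$ with $\langle uv,w\rangle=\langle u,vw\rangle$; $X^*$ denotes the adjoint of a linear operator on $g$. For smooth $\varphi$ on $g$, $\nabla\varphi(u)$ is defined by $\langle\nabla\varphi(u),X\rangle=\frac{d}{d\varepsilon}\varphi(u+\varepsilon X)|_{\varepsilon=0}$, $d\varphi(u)=u\nabla\varphi(u)$, $d'\varphi(u)=\nabla\varphi(u)u$; $\varphi$ is Ad-invariant if $\varphi(huh^{-1})=\varphi(u)$ (then $d\varphi=d'\varphi$). For linear operators $A,B,C,D$ on $g$, PB$(A,B,C,D)$ is $\{\varphi,\psi\}(u)=\langle A(d'\varphi),d'\psi\rangle-\langle D(d\varphi),d\psi\rangle+\langle B(d\varphi),d'\psi\rangle-\langle C(d'\varphi),d\psi\rangle$. $\mathbf{g}=g\oplus\cdots\oplus g$ ($n$ copies), componentwise multiplication, form $\langle\langle\mathbf{u},\mathbf{v}\rangle\rangle=\sum_k\langle u_k,v_k\rangle$; operator components $(\mathbf{A}(\mathbf{u}))_i=\sum_jA_{ij}(u_j)$. For smooth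 $\Phi$ on $\mathbf{g}$, $\nabla_j\Phi$ is the $j$-th gradient component, $d_j\Phi=u_j\nabla_j\Phi$, $d'_j\Phi=\nabla_j\Phi\,u_j$, and PB$(\mathbf{A},\mathbf{B},\mathbf{C},\mathbf{D})$ is $\{\Phi,\Psi\}=\sum_{i,j}\big(\langle A_{ij}(d'_j\Phi),d'_i\Psi\rangle-\langle D_{ij}(d_j\Phi),d_i\Psi\rangle+\langle B_{ij}(d_j\Phi),d'_i\Psi\rangle-\langle C_{ij}(d'_j\Phi),d_i\Psi\rangle\big)$. Hamiltonian equations generated by $\Phi$: $\frac{d}{dt}\ell(\mathbf{u})=\{\Phi,\ell\}(\mathbf{u})$ for all linear functions $\ell$. *)

(* Defs.v *)
From HB Require Import structures.
From mathcomp Require Import all_boot all_order all_algebra.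
From mathcomp Require Import all_classical all_reals all_analysis.
Set Implicit Arguments. Unset Strict Implicit. Unset Printing Implicit Defensive.
Import Order.TTheory GRing.Theory Num.Theory.
Local Open Scope ring_scope.
Local Open Scope classical_set_scope.

Section Defs.
Context {R : realType}.

(* C^k functions via continuous iterated directional derivatives (on a
   finite-dimensional space this is the usual C^k). *)
Fixpoint Ck {V : normedModType R} (k : nat) (f : V -> R) : Prop :=
  match k with
  | 0 => continuous (f : V -> R^o)
  | k'.+1 => [/\ continuous (f : V -> R^o), (forall x v, derivable (f : V -> R^o) x v)
                & forall v, Ck k' (fun x => 'D_v (f : V -> R^o) x)]
  end.

Definition smooth {V : normedModType R} (f : V -> R) : Prop := forall k, Ck k f.

Definition grad {V : normedModType R} (B : V -> V -> R) (f : V -> R) (u : V) : V :=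
  xget 0 [set y | forall X, B y X = 'D_X (f : V -> R^o) u].

Definition frobenius_setting (m : nat) (mul : 'rV[R]_m -> 'rV[R]_m -> 'rV[R]_m)
  (one : 'rV[R]_m) (form : 'rV[R]_m -> 'rV[R]_m -> R) : Prop :=
  (forall u v w, mul u (mul v w) = mul (mul u v) w) /\
  (forall u, mul one u = u /\ mul u one = u) /\
  (forall a u v w, mul (a *: u + v) w = a *: mul u w + mul v w) /\
  (forall a u v w, mul w (a *: u + v) = a *: mul w u + mul w v) /\
  (forall a u v w, form (a *: u + v) w = a * form u w + form v w) /\
  (forall u v, form u v = form v u) /\
  (forall u, (forall v, form u v = 0) -> u = 0) /\
  (forall u v w, form (mul u v) w = form u (mul v w)).

Definition is_adjoint (m : nat) (form : 'rV[R]_m -> 'rV[R]_m -> R)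
  (X Y : 'rV[R]_m -> 'rV[R]_m) : Prop :=
  forall u v, form (X u) v = form u (Y v).

Definition Ad_invariant (m : nat) (mul : 'rV[R]_m -> 'rV[R]_m -> 'rV[R]_m)
  (one : 'rV[R]_m) (phi : 'rV[R]_m -> R) : Prop :=
  forall u h h', mul h h' = one -> mul h' h = one -> phi (mul (mul h u) h') = phi u.

Definition PB (m : nat) (mul : 'rV[R]_m -> 'rV[R]_m -> 'rV[R]_m)
  (form : 'rV[R]_m -> 'rV[R]_m -> R) (A B C D : 'rV[R]_m -> 'rV[R]_m)
  (phi psi : 'rV[R]_m -> R) (u : 'rV[R]_m) : R :=
  let dphi := mul u (grad form phi u) in let d'phi := mul (grad form phi u) u in
  let dpsi := mul u (grad form psi u) in let d'psi := mul (grad form psi u) u in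
  form (A d'phi) d'psi - form (D dphi) dpsi + form (B dphi) d'psi
  - form (C d'phi) dpsi.

Definition formn (n m : nat) (form : 'rV[R]_m -> 'rV[R]_m -> R)
  (U V : 'M[R]_(n, m)) : R := \sum_(k < n) form (row k U) (row k V).

Definition PBn (n m : nat) (mul : 'rV[R]_m -> 'rV[R]_m -> 'rV[R]_m)
  (form : 'rV[R]_m -> 'rV[R]_m -> R)
  (A B C D : 'I_n -> 'I_n -> 'rV[R]_m -> 'rV[R]_m)
  (Phi Psi : 'M[R]_(n, m) -> R) (U : 'M[R]_(n, m)) : R :=
  let gPhi := grad (formn form) Phi U in let gPsi := grad (formn form) Psi U in
  let d j := mul (row j U) (row j gPhi) in let d' j := mul (row j gPhi) (row j U) in
  let e j := mul (row j U) (row j gPsi) in let e' j := mul (row j gPsi) (row j U) in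
  \sum_(i < n) \sum_(j < n)
    (form (A i j (d' j)) (e' i) - form (D i j (d j)) (e i)
     + form (B i j (d j)) (e' i) - form (C i j (d' j)) (e i)).

Definition is_Poisson {V : normedModType R}
  (br : (V -> R) -> (V -> R) -> V -> R) : Prop :=
  forall f g h, smooth f -> smooth g -> smooth h ->
   [/\ (forall x, br f g x = - br g f x),
       (forall x, br f (fun y => g y * h y) x = br f g x * h x + g x * br f h x)
     & (forall x, br f (br g h) x + br g (br h f) x + br h (br f g) x = 0)].

Definition sigma (n m : nat) (U : 'M[R]_(n, m)) : 'M[R]_(n, m) :=
  \matrix_(k < n, l < m) U (ordS k) l.

(* M(u_1,...,u_n) = u_n ... u_1 *)
Definition Mprod (n m : nat) (mul : 'rV[R]_m -> 'rV[R]_m -> 'rV[R]_m)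
  (one : 'rV[R]_m) (U : 'M[R]_(n, m)) : 'rV[R]_m :=
  foldr (fun k acc => mul acc (row k U)) one (enum 'I_n).

End Defs.

(* Main.v *)
Require Import Defs.
From HB Require Import structures.
From mathcomp Require Import all_boot all_order all_algebra.
From mathcomp Require Import all_classical all_reals all_analysis.
From mathcomp Require Import ring lra.
Import Order.TTheory GRing.Theory Num.Theory.
Local Open Scope ring_scope.

Module Helpers.
Import numFieldNormedType.Exports.
Set Implicit Arguments. Unset Strict Implicit. Unset Printing Implicit Defensive.
Local Open Scope ring_scope.

Section Cont.
Context {R : realType}.

Lemma cont_sum (T : topologicalType) (V : normedModType R) (I : Type)
  (r : seq I) (f : I -> T -> V) :
  (forall i, continuous (f i)) -> continuous (fun x => \sum_(i <- r) f i x).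
Proof.
move=> hf; elim: r => [|a r IH].
  under eq_fun do rewrite big_nil. exact: cst_continuous.
under eq_fun do rewrite big_cons.
move=> x; exact: (continuousD (hf a x) (IH x)).
Qed.

Lemma lin_additive (U V : lmodType R) (f : U -> V) :
  (forall a x y, f (a *: x + y) = a *: f x + f y) ->
  [/\ f 0 = 0, forall x y, f (x + y) = f x + f y & forall a x, f (a *: x) = a *: f x].
Proof.
move=> hf.
have f0 : f 0 = 0.
  have := hf 1 0 0; rewrite !scale1r addr0 => h.
  by apply: (addrI (f 0)); rewrite addr0 -{1}h.
split=> //.
  by move=> x y; have := hf 1 x y; rewrite !scale1r.
by move=> a x; have := hf a x 0; rewrite !addr0 f0 addr0.
Qed.

Lemma lin_sum (U V : lmodType R) (f : U -> V) (I : Type) (r : seq I) (F : I -> U) :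
  (forall a x y, f (a *: x + y) = a *: f x + f y) ->
  f (\sum_(i <- r) F i) = \sum_(i <- r) f (F i).
Proof.
move=> /lin_additive [f0 fD _].
by apply: (big_morph f fD f0).
Qed.

Lemma lin_mx_expand p q (V : lmodType R) (f : 'M[R]_(p, q) -> V) :
  (forall a x y, f (a *: x + y) = a *: f x + f y) ->
  forall N, f N = \sum_(i < p) \sum_(j < q) N i j *: f (delta_mx i j).
Proof.
move=> hf N; rewrite {1}(matrix_sum_delta N) (lin_sum _ _ hf).
apply: eq_bigr => i _; rewrite (lin_sum _ _ hf); apply: eq_bigr => j _.
by have [_ _ ->] := lin_additive hf.
Qed.

Lemma lin_mx_cont p q (V : normedModType R) (f : 'M[R]_(p, q) -> V) :
  (forall a x y, f (a *: x + y) = a *: f x + f y) -> continuous f.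
Proof.
move=> hf; rewrite (_ : f = fun N => \sum_(i < p) \sum_(j < q) N i j *: f (delta_mx i j)).
  apply: cont_sum => i; apply: cont_sum => j x.
  apply: continuousZr_tmp; exact: coord_continuous.
by apply: funext => N; apply: lin_mx_expand.
Qed.

End Cont.

Section Frob.
Context {R : realType} {m : nat} (mul : 'rV[R]_m -> 'rV[R]_m -> 'rV[R]_m)
  (one : 'rV[R]_m) (form : 'rV[R]_m -> 'rV[R]_m -> R).
Hypothesis hF : frobenius_setting mul one form.

Lemma mA u v w : mul u (mul v w) = mul (mul u v) w.
Proof. by case: hF. Qed.
Lemma m1l u : mul one u = u.
Proof. by case: hF => _ [h _]; case: (h u). Qed.
Lemma m1r u : mul u one = u.
Proof. by case: hF => _ [h _]; case: (h u). Qed.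
Lemma mLl w : forall a u v, mul (a *: u + v) w = a *: mul u w + mul v w.
Proof. by case: hF => _ [_ [h _]] a u v; apply: h. Qed.
Lemma mLr w : forall a u v, mul w (a *: u + v) = a *: mul w u + mul w v.
Proof. by case: hF => _ [_ [_ [h _]]] a u v; apply: h. Qed.
Lemma fL0 w : forall a u v, form (a *: u + v) w = a * form u w + form v w.
Proof. by case: hF => _ [_ [_ [_ [h _]]]] a u v; apply: h. Qed.
Lemma fC u v : form u v = form v u.
Proof. by case: hF => _ [_ [_ [_ [_ [h _]]]]]. Qed.
Lemma fnd u : (forall v, form u v = 0) -> u = 0.
Proof. by case: hF => _ [_ [_ [_ [_ [_ [h _]]]]]]; apply: h. Qed.
Lemma finv u v w : form (mul u v) w = form u (mul v w).
Proof. by case: hF => _ [_ [_ [_ [_ [_ [_ h]]]]]]. Qed.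

Lemma m0l w : mul 0 w = 0. Proof. by case: (lin_additive (mLl w)). Qed.
Lemma mDl u v w : mul (u + v) w = mul u w + mul v w.
Proof. by case: (lin_additive (mLl w)). Qed.
Lemma mZl a u w : mul (a *: u) w = a *: mul u w.
Proof. by case: (lin_additive (mLl w)). Qed.
Lemma mNl u w : mul (- u) w = - mul u w.
Proof. by rewrite -scaleN1r mZl scaleN1r. Qed.
Lemma mBl u v w : mul (u - v) w = mul u w - mul v w.
Proof. by rewrite mDl mNl. Qed.
Lemma m0r w : mul w 0 = 0. Proof. by case: (lin_additive (mLr w)). Qed.
Lemma mDr u v w : mul w (u + v) = mul w u + mul w v.
Proof. by case: (lin_additive (mLr w)). Qed.
Lemma mZr a u w : mul w (a *: u) = a *: mul w u.
Proof. by case: (lin_additive (mLr w)). Qed.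
Lemma mNr u w : mul w (- u) = - mul w u.
Proof. by rewrite -scaleN1r mZr scaleN1r. Qed.
Lemma mBr u v w : mul w (u - v) = mul w u - mul w v.
Proof. by rewrite mDr mNr. Qed.

Lemma fL' w : forall a u v, form (a *: u + v) w = a *: form u w + form v w.
Proof. exact: fL0. Qed.
Lemma fRL' w : forall a u v, form w (a *: u + v) = a *: form w u + form w v.
Proof. by move=> a u v; rewrite !(fC w) fL0. Qed.
Lemma f0l w : form 0 w = 0. Proof. by case: (lin_additive (fL' w)). Qed.
Lemma fDl u v w : form (u + v) w = form u w + form v w.
Proof. by case: (lin_additive (fL' w)). Qed.
Lemma fZl a u w : form (a *: u) w = a * form u w.
Proof. by case: (lin_additive (fL' w)). Qed.
Lemma fNl u w : form (- u) w = - form u w.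
Proof. by rewrite -scaleN1r fZl mulN1r. Qed.
Lemma fBl u v w : form (u - v) w = form u w - form v w.
Proof. by rewrite fDl fNl. Qed.
Lemma f0r w : form w 0 = 0. Proof. by rewrite fC f0l. Qed.
Lemma fDr u v w : form w (u + v) = form w u + form w v.
Proof. by rewrite !(fC w) fDl. Qed.
Lemma fZr a u w : form w (a *: u) = a * form w u.
Proof. by rewrite !(fC w) fZl. Qed.
Lemma fNr u w : form w (- u) = - form w u.
Proof. by rewrite !(fC w) fNl. Qed.
Lemma fBr u v w : form w (u - v) = form w u - form w v.
Proof. by rewrite !(fC w) fBl. Qed.

Lemma finv2 a b c : form a (mul b c) = form (mul a b) c.
Proof. by rewrite finv. Qed.
Lemma frot a b c : form a (mul b c) = form (mul c a) b.
Proof. by rewrite fC finv fC. Qed.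

Lemma mul_expand u v :
  mul u v = \sum_(a < m) \sum_(b < m) (u 0 a * v 0 b) *: mul 'e_a 'e_b.
Proof.
rewrite {1}(row_sum_delta u) (lin_sum _ _ (mLl v)).
apply: eq_bigr => a _; rewrite mZl {1}(row_sum_delta v) (lin_sum _ _ (mLr _)).
rewrite scaler_sumr; apply: eq_bigr => b _; by rewrite mZr scalerA.
Qed.

Lemma mul_cont : continuous (fun p : 'rV[R]_m * 'rV[R]_m => mul p.1 p.2).
Proof.
rewrite (_ : (fun p => _) = fun p : 'rV[R]_m * 'rV[R]_m =>
   \sum_(a < m) \sum_(b < m) (p.1 0 a * p.2 0 b) *: mul 'e_a 'e_b); last first.
  by apply: funext => p; rewrite mul_expand.
apply: cont_sum => a; apply: cont_sum => b x.
have H := @continuousZr_tmp R _ _ (fun z : (matrix R 1 m * matrix R 1 m)%type => z.1 0 a * z.2 0 b) (mul (delta_mx 0 a) (delta_mx 0 b)) x. apply: H. apply: continuousM.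
  apply: (@continuous_comp _ _ _ fst (fun u : 'rV[R]_m => u 0 a)).
    exact: cvg_fst.
  exact: coord_continuous.
apply: (@continuous_comp _ _ _ snd (fun u : 'rV[R]_m => u 0 b)).
  exact: cvg_snd.
exact: coord_continuous.
Qed.

End Frob.

Lemma lin_diff {R : realType} p q (W : normedModType R) (f : 'M[R]_(p, q) -> W) x :
  (forall a u v, f (a *: u + v) = a *: f u + f v) -> differentiable f x.
Proof.
move=> hf.
pose fL : {linear 'M[R]_(p, q) -> W} := HB.pack f (GRing.isLinear.Build _ _ _ _ f hf).
exact: (@linear_differentiable _ _ _ fL x (lin_mx_cont hf)).
Qed.

Section Diff.
Context {R : realType} {m : nat} (mul : 'rV[R]_m -> 'rV[R]_m -> 'rV[R]_m)
  (one : 'rV[R]_m) (form : 'rV[R]_m -> 'rV[R]_m -> R).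
Hypothesis hF : frobenius_setting mul one form.

Lemma mul_diff (p : 'rV[R]_m * 'rV[R]_m) :
  differentiable (fun p : 'rV[R]_m * 'rV[R]_m => mul p.1 p.2) p.
Proof.
have bl : bilinear_for (GRing.Scale.Law.clone _ _ *:%R _)
    (GRing.Scale.Law.clone _ _ *:%R _) mul.
  by split=> [u'|u] a x y /=; rewrite ?(mLl hF) ?(mLr hF).
pose mB : {bilinear 'rV[R]_m -> 'rV[R]_m -> 'rV[R]_m} :=
  HB.pack mul (bilinear_isBilinear.Build _ _ _ _ _ _ mul bl).
exact: (@differentiable_bilin _ _ _ _ mB p (mul_cont hF)).
Qed.

Lemma prod_diff n (s : seq 'I_n) (V : 'M[R]_(n, m)) :
  differentiable (fun V : 'M[R]_(n, m) => foldr (fun k acc => mul acc (row k V)) one s) V.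
Proof.
elim: s => [|k s IH] /=.
  exact: differentiable_cst.
have -> : (fun V : 'M[R]_(n, m) => mul (foldr (fun k acc => mul acc (row k V)) one s) (row k V))
  = (fun p : 'rV[R]_m * 'rV[R]_m => mul p.1 p.2) \o
    (fun V : 'M[R]_(n, m) => (foldr (fun k acc => mul acc (row k V)) one s, row k V)).
  by [].
apply: differentiable_comp; last exact: mul_diff.
apply: differentiable_pair => //.
apply: lin_diff => a u v; by rewrite linearP.
Qed.

End Diff.

Section Anal.
Context {R : realType}.

Lemma dir_curve (V W : normedModType R) (f : V -> W) (x v : V) (s : R) :
  derivable f (s *: v + x) v ->
  is_derive s 1 (fun t : R => f (t *: v + x)) ('D_v f (s *: v + x)).
Proof.
move=> hd.
have E : (fun h : R => h^-1 *: (((fun t : R => f (t *: v + x)) \o shift s) (h *: 1)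
            - f (s *: v + x)))
       = (fun h : R => h^-1 *: ((f \o shift (s *: v + x)) (h *: v) - f (s *: v + x))).
  apply: funext => h /=.
  by rewrite [h *: 1]mulr1 scalerDl addrA.
split; first by rewrite /derivable E.
by rewrite /derive E.
Qed.

Lemma mvt0 (g dg : R -> R) (t : R) :
  (forall s : R, is_derive s (1 : R) g (dg s)) ->
  exists c, `|c| <= `|t| /\ g t - g 0 = t * dg c.
Proof.
move=> hd.
have gc : continuous g.
  move=> s; apply: differentiable_continuous; apply/derivable1_diffP.
  by case: (hd s).
have [t0|t0] := leP 0 t.
  have gw : {within `[0, t], continuous g}%classic by apply: continuous_subspaceT.
  have [c ci E] := MVT_segment t0 (fun s _ => hd s) gw.
  exists c; split; last by rewrite E subr0 mulrC.
  move: ci; rewrite in_itv /= => /andP[c0 ct].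
  by rewrite !ger0_norm.
have gw : {within `[t, 0], continuous g}%classic by apply: continuous_subspaceT.
have [c ci E] := MVT_segment (ltW t0) (fun s _ => hd s) gw.
exists c; split.
  move: ci; rewrite in_itv /= => /andP[tc c0].
  by rewrite !ler0_norm ?lerN2 // ltW.
by rewrite -opprB E sub0r mulrN opprK mulrC.
Qed.

Lemma entry_le_norm a b (M : 'M[R]_(a, b)) i j : `|M i j| <= `|M|.
Proof.
rewrite [X in _ <= X]/Num.Def.normr /= mx_normrE.
exact: (le_bigmax _ (fun ij : 'I_a * 'I_b => `|M ij.1 ij.2|) (i, j)).
Qed.

Lemma norm_le_entries a b (M : 'M[R]_(a, b)) r :
  0 <= r -> (forall i j, `|M i j| <= r) -> `|M| <= r.
Proof.
move=> r0 h; rewrite [X in X <= _]/Num.Def.normr /= mx_normrE.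
by apply: bigmax_le => // -[i j] _; apply: h.
Qed.


Lemma est_bound (m : nat) (phi : 'rV[R]_m -> R) (p h : 'rV[R]_m) (e' : R) :
  (forall x v, derivable (phi : 'rV[R]_m -> R^o) x v) ->
  (forall xi, `|xi - p| <= `|h| -> forall k : 'I_m,
     `|'D_('e_k) (phi : _ -> R^o) xi - 'D_('e_k) (phi : _ -> R^o) p| <= e') ->
  `|phi (h + p) - phi p - \sum_(k < m) h 0 k * 'D_('e_k) (phi : _ -> R^o) p|
    <= m%:R * (e' * `|h|).
Proof.
move=> hd hc.
pose q (j : nat) := p + \row_(i < m) (if (i < j)%N then h 0 i else 0).
have q0 : q 0%N = p.
  by rewrite /q (_ : \row_i _ = 0) ?addr0 //; apply/rowP => i; rewrite !mxE.
have qm : q m = h + p.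
  by rewrite /q addrC; congr (_ + _); apply/rowP => i; rewrite !mxE ltn_ord.
have qS : forall k : 'I_m, q k.+1 = h 0 k *: 'e_k + q k.
  move=> k; rewrite /q addrCA; congr (_ + _); apply/rowP => i; rewrite !mxE /=.
  case: (ltngtP i k) => [ik|ki|ik].
  - rewrite ltnS (ltnW ik); case: eqP => [e|_]; last by rewrite mulr0 add0r.
    by move: ik; rewrite e ltnn.
  - rewrite ltnS leqNgt ki /=; case: eqP => [e|_]; last by rewrite mulr0 addr0.
    by move: ki; rewrite e ltnn.
  - have -> : i = k by apply: val_inj.
    by rewrite ltnSn eqxx mulr1 addr0.
have tele : phi (h + p) - phi p = \sum_(k < m) (phi (q k.+1) - phi (q k)).
  rewrite -qm -{1}q0 -(big_mkord xpredT (fun k => phi (q k.+1) - phi (q k))).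
  by rewrite telescope_sumr.
rewrite tele -sumrB.
apply: le_trans (ler_norm_sum _ _ _) _.
apply: (@le_trans _ _ (\sum_(k < m) (e' * `|h|))); last first.
  by rewrite sumr_const card_ord mulr_natl.
apply: ler_sum => k _.
rewrite qS.
have [c [cle E]] := mvt0 (g := fun t => phi (t *: 'e_k + q k))
   (dg := fun s => 'D_('e_k) (phi : _ -> R^o) (s *: 'e_k + q k)) (h 0 k)
   (fun s => dir_curve (hd _ _)).
rewrite /= scale0r add0r in E.
rewrite E -mulrBr normrM mulrC.
have hk : `|h 0 k| <= `|h| by apply: entry_le_norm.
have hx : `|'D_('e_k) (phi : _ -> R^o) (c *: 'e_k + q k) - 'D_('e_k) (phi : _ -> R^o) p| <= e'.
  apply: hc; rewrite /q (addrC p) addrA addrK.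
  apply: norm_le_entries => // i j; rewrite !mxE.
  rewrite ord1 /=; case: (j =P k) => [->|_].
    rewrite ltnn /= mulr1 addr0; exact: le_trans cle hk.
  rewrite mulr0 add0r; case: ifP => _; [exact: entry_le_norm | by rewrite normr0].
by apply: ler_pM.
Qed.

Lemma smooth_diff (m : nat) (phi : 'rV[R]_m -> R) (p : 'rV[R]_m) :
  Ck 1 phi -> differentiable (phi : 'rV[R]_m -> R^o) p.
Proof.
case=> phic hd hD.
pose L := fun h : 'rV[R]_m => (\sum_(k < m) h 0 k * 'D_('e_k) (phi : _ -> R^o) p : R^o).
have Llin : forall a u v, L (a *: u + v) = a *: L u + L v.
  move=> a u v; rewrite /L scaler_sumr -big_split; apply: eq_bigr => k _.
  by rewrite !mxE /= mulrDl -mulrA.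
pose fL : {linear 'rV[R]_m -> R^o} := HB.pack L (GRing.isLinear.Build _ _ _ _ L Llin).
have Lc : continuous fL := lin_mx_cont Llin.
have est : (phi : 'rV[R]_m -> R^o) \o shift p = cst ((phi : 'rV[R]_m -> R^o) p) + (fL : 'rV[R]_m -> R^o) +o_ (0 : 'rV[R]_m) id.
  apply/eqaddoP => e e0.
  have e'0 : 0 < e / (m%:R + 1) by rewrite divr_gt0 // ltr_wpDl.
  have H : forall k : 'I_m, \forall x \near p,
      `|'D_('e_k) (phi : _ -> R^o) p - 'D_('e_k) (phi : _ -> R^o) x| <= e / (m%:R + 1).
    move=> k.
    by have /(_ p)/cvgrPdist_le/(_ _ e'0) := hD 'e_k.
  have [d d0 Hd] := (nbhs_ballP _ _).1 (filter_forall _ H).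
  near=> h.
  have hd' : `|h| < d by near: h; exact: (@pseudometric_normed_Zmodule.nbhs0_lt R 'rV[R]_m d d0).
  rewrite /= opprD addrA.
  apply: le_trans (est_bound hd _) _.
    move=> xi hxi k; rewrite distrC; apply: (Hd xi).
    by rewrite -ball_normE /= distrC; exact: le_lt_trans hxi hd'.
  rewrite mulrA; apply: ler_wpM2r => //.
  rewrite mulrCA; apply: ler_piMr; first exact: ltW.
  by rewrite ler_pdivrMr ?ltr_wpDl // mul1r lerDl.
Unshelve. all: try by end_near.
have dE := diff_unique Lc est.
by apply/diff_locallyP; rewrite dE; split.
Qed.
End Anal.

Lemma inj_unit {R : fieldType} k (M : 'M[R]_k) :
  (forall v : 'rV[R]_k, v *m M = 0 -> v = 0) -> M \in unitmx.
Proof.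
move=> H; rewrite -row_free_unit -kermx_eq0; apply/eqP/row_matrixP => i.
by rewrite row0; apply: H; rewrite -row_mul mulmx_ker row0.
Qed.

Lemma gradP {R : realType} (V : normedModType R) (B : V -> V -> R) (f : V -> R) u :
  (exists y, forall X, B y X = 'D_X (f : V -> R^o) u) ->
  forall X, B (grad B f u) X = 'D_X (f : V -> R^o) u.
Proof. by move=> ex; have := xgetPex 0 ex. Qed.

Section Grad.
Context {R : realType} {m : nat} (mul : 'rV[R]_m -> 'rV[R]_m -> 'rV[R]_m)
  (one : 'rV[R]_m) (form : 'rV[R]_m -> 'rV[R]_m -> R).
Hypothesis hF : frobenius_setting mul one form.

Lemma form_expandr u X : form u X = \sum_(b < m) X 0 b * form u 'e_b.
Proof.
rewrite {1}(row_sum_delta X) (lin_sum _ _ (fRL' hF u)).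
by apply: eq_bigr => b _; rewrite (fZr hF).
Qed.

Lemma form_expandl v w : form v w = \sum_(a < m) v 0 a * form 'e_a w.
Proof.
rewrite {1}(row_sum_delta v) (lin_sum _ _ (fL' hF w)).
by apply: eq_bigr => b _; rewrite (fZl hF).
Qed.

Definition Gm : 'M[R]_m := \matrix_(a, b) form 'e_a 'e_b.

Lemma Gm_unit : Gm \in unitmx.
Proof.
apply: inj_unit => v hv; apply: (fnd hF) => X.
rewrite form_expandr big1 // => b _.
have hb : form v 'e_b = 0.
  have : (v *m Gm) 0 b = 0 by rewrite hv mxE.
  rewrite mxE => E; rewrite form_expandl; apply: etrans E; apply: eq_bigr => a _; by rewrite /Gm !mxE.
by rewrite hb mulr0.
Qed.

Definition rz (l : 'rV[R]_m -> R) : 'rV[R]_m := (\row_b l 'e_b) *m invmx Gm.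

Lemma rzP (l : 'rV[R]_m -> R) : (forall a x y, l (a *: x + y) = a * l x + l y) ->
  forall X, form (rz l) X = l X.
Proof.
move=> hl X; rewrite form_expandr.
have hl' : forall a x y, l (a *: x + y) = a *: l x + l y by [].
rewrite {2}(row_sum_delta X) (lin_sum _ _ hl').
apply: eq_bigr => b _; have [_ _ ->] := lin_additive hl'; congr (_ * _).
rewrite form_expandl.
have E : ((rz l) *m Gm) 0 b = l 'e_b by rewrite /rz mulmxKV ?Gm_unit // mxE.
rewrite -E mxE; apply: eq_bigr => a _.
by rewrite /Gm !mxE.
Qed.

Lemma grad_phi (phi : 'rV[R]_m -> R) (u : 'rV[R]_m) : Ck 1 phi ->
  forall X, form (grad form phi u) X = 'D_X (phi : _ -> R^o) u.
Proof.
move=> c1; apply: gradP.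
have d := smooth_diff u c1.
exists (rz (fun X => 'd (phi : _ -> R^o) u X)).
move=> X; rewrite rzP; first by rewrite deriveE.
by move=> a x y; rewrite linearP.
Qed.

End Grad.

Lemma derive_ext {R : realType} (V V' W : normedModType R) (f : V -> W) (g : V' -> W)
  a v b w : (forall h : R, f (h *: v + a) = g (h *: w + b)) ->
  'D_v f a = 'D_w g b.
Proof.
move=> H; have H0 := H 0; rewrite !scale0r !add0r in H0.
have E : (fun h : R => h^-1 *: ((f \o shift a) (h *: v) - f a)) =
         (fun h : R => h^-1 *: ((g \o shift b) (h *: w) - g b)).
  by apply: funext => h /=; rewrite H H0.
by rewrite /derive E.
Qed.

Section Prod.
Context {R : realType} {m : nat} (mul : 'rV[R]_m -> 'rV[R]_m -> 'rV[R]_m)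
  (one : 'rV[R]_m) (form : 'rV[R]_m -> 'rV[R]_m -> R).
Hypothesis hF : frobenius_setting mul one form.

Definition Fl (s : seq 'rV[R]_m) := foldr (fun x acc => mul acc x) one s.

Lemma L_adj (s : seq 'rV[R]_m) i h Z : (i.+1 < size s)%N ->
  Fl (set_nth 0 s i (nth 0 s i + h *: mul Z (nth 0 s i))) =
  Fl (set_nth 0 s i.+1 (nth 0 s i.+1 + h *: mul (nth 0 s i.+1) Z)).
Proof.
elim: s i => [|c s IH] [|i] //=.
  case: s {IH} => [|b t] //= _.
  rewrite !(mDr hF) !(mZr hF) !(mDl hF) !(mZl hF).
  by rewrite !(mA hF).
by move=> hi; rewrite IH.
Qed.

Lemma L_left (s : seq 'rV[R]_m) h Z : s != [::] ->
  Fl (set_nth 0 s (size s).-1 (nth 0 s (size s).-1 + h *: mul Z (nth 0 s (size s).-1))) =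
  Fl s + h *: mul Z (Fl s).
Proof.
elim: s => [//|c s IH] _.
case: s IH => [|b t] IH /=.
  by rewrite !(m1l hF).
rewrite IH // (mDl hF) (mZl hF) (mA hF).
done.
Qed.

Lemma L_right (s : seq 'rV[R]_m) h Z : s != [::] ->
  Fl (set_nth 0 s 0 (nth 0 s 0 + h *: mul (nth 0 s 0) Z)) =
  Fl s + h *: mul (Fl s) Z.
Proof.
case: s => [//|c t] _ /=.
by rewrite (mDr hF) (mZr hF) (mA hF).
Qed.

Lemma Fl_cat s1 s2 : Fl (s1 ++ s2) = mul (Fl s2) (Fl s1).
Proof.
elim: s1 => [|c s IH] /=; first by rewrite (m1r hF).
by rewrite IH (mA hF).
Qed.

Definition E n (k : 'I_n) (x : 'rV[R]_m) : 'M[R]_(n, m) :=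
  \matrix_(i, j) (if i == k then x 0 j else 0).

Lemma row_E n (k i : 'I_n) x : row i (E k x) = if i == k then x else 0.
Proof. by apply/rowP => j; rewrite !mxE; case: ifP => _; rewrite ?mxE. Qed.

Definition rows n (V : 'M[R]_(n, m)) := map (fun k => row k V) (enum 'I_n).

Lemma Mprod_rows n (V : 'M[R]_(n, m)) : Mprod mul one V = Fl (rows V).
Proof. by rewrite /Mprod /Fl /rows foldr_map. Qed.

Lemma size_rows n (V : 'M[R]_(n, m)) : size (rows V) = n.
Proof. by rewrite size_map size_enum_ord. Qed.

Lemma nth_rows n (V : 'M[R]_(n, m)) (k : 'I_n) : nth 0 (rows V) k = row k V.
Proof.
rewrite /rows (nth_map k); last by rewrite size_enum_ord.
by congr row; apply: val_inj; rewrite /= nth_enum_ord.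
Qed.

Lemma rows_E n (V : 'M[R]_(n, m)) (k : 'I_n) h x :
  rows (h *: E k x + V) = set_nth 0 (rows V) k (row k V + h *: x).
Proof.
apply: (@eq_from_nth _ 0).
  by rewrite size_set_nth !size_rows; apply/esym/maxn_idPr; exact: ltn_ord.
move=> i; rewrite size_rows => ilt.
have nr : forall W : 'M[R]_(n, m), nth 0 (rows W) i = row (Ordinal ilt) W.
  by move=> W; rewrite -(nth_rows W (Ordinal ilt)).
rewrite nth_set_nth /= !nr linearD linearZ /= row_E.
have -> : (i == nat_of_ord k) = (Ordinal ilt == k) by [].
by case: eqP => [->|_]; rewrite ?scaler0 ?add0r // addrC.
Qed.

End Prod.

Section Sig.
Context {R : realType} {m n : nat}.

Lemma sigma_lin (a : R) (X Y : 'M[R]_(n, m)) :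
  sigma (a *: X + Y) = a *: sigma X + sigma Y.
Proof. by apply/matrixP => i j; rewrite !mxE. Qed.

Lemma iter_sigma_lin r (a : R) (X Y : 'M[R]_(n, m)) :
  iter r (@sigma R n m) (a *: X + Y) = a *: iter r (@sigma R n m) X + iter r (@sigma R n m) Y.
Proof. by elim: r => [|r IH] //=; rewrite IH sigma_lin. Qed.

Lemma row_iter_sigma r (V : 'M[R]_(n, m)) k :
  row k (iter r (@sigma R n m) V) = row (iter r (@ordS n) k) V.
Proof.
elim: r k => [|r IH] k //=.
have -> : row k (sigma (iter r (@sigma R n m) V)) = row (ordS k) (iter r (@sigma R n m) V).
  by apply/rowP => j; rewrite !mxE.
by rewrite IH -iterSr.
Qed.

Lemma iter_ordS_inj r : injective (iter r (@ordS n)).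
Proof. by elim: r => [|r IH] //= x y /ordS_inj /IH. Qed.

Lemma val_iter_ordS r (k : 'I_n) : val (iter r (@ordS n) k) = ((k + r) %% n)%N.
Proof.
elim: r => [|r IH] /=; first by rewrite addn0 modn_small.
by rewrite IH addnS -addn1 modnDml addn1.
Qed.

End Sig.

Section Grad2.
Context {R : realType} {m : nat} (mul : 'rV[R]_m -> 'rV[R]_m -> 'rV[R]_m)
  (one : 'rV[R]_m) (form : 'rV[R]_m -> 'rV[R]_m -> R).
Hypothesis hF : frobenius_setting mul one form.

Lemma iter_sigma_E n r (j j' : 'I_n) (x : 'rV[R]_m) :
  iter r (@ordS n) j' = j -> iter r (@sigma R n m) (E j x) = E j' x.
Proof.
move=> H; apply/row_matrixP => k; rewrite row_iter_sigma !row_E.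
by rewrite -H (inj_eq (@iter_ordS_inj n r)).
Qed.

Lemma formn_E n (G : 'M[R]_(n, m)) k x : formn form G (E k x) = form (row k G) x.
Proof.
rewrite /formn (bigD1 k) //= row_E eqxx big1 ?addr0 // => i ik.
by rewrite row_E (negbTE ik) (f0r hF).
Qed.

Lemma sum_E n (X : 'M[R]_(n, m)) : \sum_(k < n) E k (row k X) = X.
Proof.
apply/matrixP => i j; rewrite summxE (bigD1 i) //= !mxE eqxx big1 ?addr0 //.
by move=> k ki; rewrite !mxE eq_sym (negbTE ki).
Qed.

Lemma E_lin n (k : 'I_n) : forall (a : R) (x y : 'rV[R]_m), E k (a *: x + y) = a *: E k x + E k y.
Proof.
move=> a x y; apply/matrixP => i j; rewrite !mxE.
by case: ifP => _; rewrite ?mxE ?mulr0 ?addr0.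
Qed.

Lemma grad_n n (f : 'M[R]_(n, m) -> R) U : differentiable (f : _ -> R^o) U ->
  forall X, formn form (grad (formn form) f U) X = 'D_X (f : _ -> R^o) U.
Proof.
move=> d; apply: gradP.
pose l := fun X : 'M[R]_(n, m) => ('d (f : _ -> R^o) U X : R).
have ll : forall a x y, l (a *: x + y) = a * l x + l y.
  by move=> a x y; rewrite /l linearP.
exists (\matrix_(i, j) (rz form (fun x => l (E i x))) 0 j).
move=> X; rewrite deriveE // -/(l X).
rewrite /formn -[Y in l Y](sum_E X).
have ll' : forall a x y, l (a *: x + y) = a *: l x + l y by [].
rewrite (lin_sum _ _ ll'); apply: eq_bigr => k _.
rewrite (_ : row k _ = rz form (fun x => l (E k x))); last first.
  by apply/rowP => j; rewrite !mxE.
rewrite (rzP hF) //.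
by move=> a x y; rewrite E_lin ll.
Qed.

End Grad2.

Section Rel.
Context {R : realType} {m : nat} (mul : 'rV[R]_m -> 'rV[R]_m -> 'rV[R]_m)
  (one : 'rV[R]_m) (form : 'rV[R]_m -> 'rV[R]_m -> R).
Hypothesis hF : frobenius_setting mul one form.
Context {n' : nat}.
Local Notation N := n'.+1.

Definition Phi (phi : 'rV[R]_m -> R) r (V : 'M[R]_(N, m)) : R :=
  phi (Mprod mul one (iter r (@sigma R N m) V)).

Lemma Phi_diff phi r U : Ck 1 phi -> differentiable (Phi phi r : _ -> R^o) U.
Proof.
move=> c1.
have -> : (Phi phi r : _ -> R^o) = (phi : _ -> R^o) \o
   ((fun W : 'M[R]_(N, m) => foldr (fun k acc => mul acc (row k W)) one (enum 'I_N))
     \o iter r (@sigma R N m)) by [].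
apply: differentiable_comp; last exact: smooth_diff.
apply: differentiable_comp; last exact: (prod_diff hF).
apply: lin_diff => a u v; exact: iter_sigma_lin.
Qed.

Lemma form_eq u v : (forall Z, form u Z = form v Z) -> u = v.
Proof.
move=> H; apply/eqP; rewrite -subr_eq0; apply/eqP/(fnd hF) => Z.
by rewrite (fBl hF) H subrr.
Qed.

Lemma rel phi (c1 : Ck 1 phi) (J : 'I_N) (U : 'M[R]_(N, m)) :
  let W := iter J.+1 (@sigma R N m) U in let T := Mprod mul one W in
  let G := grad (formn form) (Phi phi J.+1) U in
  let a := grad form phi T in
  [/\ forall j, j != J -> mul (row (ordS j) G) (row (ordS j) U) = mul (row j U) (row j G),
      mul (row J U) (row J G) = mul T a &
      mul (row (ordS J) G) (row (ordS J) U) = mul a T].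
Proof.
move=> W T G a.
have gr : forall k x, form (row k G) x = 'D_(E k x) (Phi phi J.+1 : _ -> R^o) U.
  by move=> k x; rewrite -(formn_E hF) (grad_n hF (Phi_diff _ _ c1)).
have dform : forall k Z, form (mul (row k U) (row k G)) Z =
    'D_(E k (mul Z (row k U))) (Phi phi J.+1 : _ -> R^o) U.
  by move=> k Z; rewrite (fC hF) -(finv hF) (fC hF) gr.
have d'form : forall k Z, form (mul (row k G) (row k U)) Z =
    'D_(E k (mul (row k U) Z)) (Phi phi J.+1 : _ -> R^o) U.
  by move=> k Z; rewrite (finv hF) gr.
have [g fg gf] := injF_bij (@iter_ordS_inj N J.+1).
pose s := rows W.
have ns : forall k, nth 0 s (g k) = row k U.
  by move=> k; rewrite nth_rows row_iter_sigma gf.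
have PhiE : forall k (F : 'rV[R]_m -> 'rV[R]_m) (h : R),
    Phi phi J.+1 (h *: E k (F (row k U)) + U) =
    phi (Fl mul one (set_nth 0 s (g k) (nth 0 s (g k) + h *: F (nth 0 s (g k))))).
  move=> k F h; rewrite /Phi iter_sigma_lin (iter_sigma_E _ (gf k)) (Mprod_rows mul one).
  by rewrite rows_E ns row_iter_sigma gf.
have sz : size s = N by rewrite size_rows.
have gJ : g J = ord_max.
  apply: (@iter_ordS_inj N J.+1); rewrite gf; apply: val_inj.
  by rewrite val_iter_ordS /= -addSnnS addnC modnDr modn_small.
have gSJ : g (ordS J) = ord0.
  apply: (@iter_ordS_inj N J.+1); rewrite gf; apply: val_inj.
  by rewrite val_iter_ordS /= add0n.
split.
- move=> j jJ; apply: form_eq => Z; rewrite d'form dform.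
  have gjm : g j != ord_max.
    apply: contra jJ => /eqP gm; apply/eqP.
    by rewrite -(gf j) gm -gJ gf.
  have gjlt : ((g j).+1 < N)%N.
    rewrite ltnS ltn_neqAle -ltnS ltn_ord andbT.
    by move: gjm; apply: contra => /eqP e; apply/eqP/val_inj.
  apply: derive_ext => h.
  have E1 := PhiE (ordS j) (fun u => mul u Z) h; rewrite /= in E1; rewrite E1.
  have E2 := PhiE j (fun u => mul Z u) h; rewrite /= in E2; rewrite E2.
  have gS : g (ordS j) = ordS (g j).
    by apply: (@iter_ordS_inj N J.+1); rewrite gf -iterSr iterS gf.
  have vS : nat_of_ord (ordS (g j)) = (g j).+1 by rewrite /= modn_small.
  by rewrite gS vS (L_adj hF) ?sz.
- apply: form_eq => Z; rewrite dform -(frot hF) (grad_phi hF _ c1).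
  apply: derive_ext => h.
  have E1 := PhiE J (fun u => mul Z u) h; rewrite /= in E1; rewrite E1 gJ.
  have -> : nat_of_ord (@ord_max n') = (size s).-1 by rewrite sz.
  rewrite (L_left hF); last by rewrite -size_eq0 sz.
  by rewrite /T (Mprod_rows mul one) addrC.
- apply: form_eq => Z; rewrite d'form -(finv2 hF) (grad_phi hF _ c1).
  apply: derive_ext => h.
  have E1 := PhiE (ordS J) (fun u => mul u Z) h; rewrite /= in E1; rewrite E1 gSJ.
  have -> : nat_of_ord (@ord0 n') = 0%N by [].
  rewrite (L_right hF); last by rewrite -size_eq0 sz.
  by rewrite /T (Mprod_rows mul one) addrC.
Qed.

End Rel.

Section Core.
Context {R : realType} {m : nat} (mul : 'rV[R]_m -> 'rV[R]_m -> 'rV[R]_m)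
  (one : 'rV[R]_m) (form : 'rV[R]_m -> 'rV[R]_m -> R).
Hypothesis hF : frobenius_setting mul one form.
Context {n' : nat}.
Local Notation N := n'.+1.
Context (A B C D : 'I_N -> 'I_N -> {linear 'rV[R]_m -> 'rV[R]_m}).
Hypothesis hi : forall i j : 'I_N, i != j ->
     forall x, A (ordS i) (ordS j) x = - B (ordS i) j x
            /\ - B (ordS i) j x = C i (ordS j) x
            /\ C i (ordS j) x = - D i j x.
Hypothesis hii : forall j : 'I_N, forall x,
     A (ordS j) (ordS j) x - D j j x + B (ordS j) j x - C j (ordS j) x = 0.

Lemma hA i j x : i != j -> A (ordS i) (ordS j) x = - B (ordS i) j x.
Proof. by move=> ij; case: (hi ij x). Qed.
Lemma hC i j x : i != j -> C i (ordS j) x = - B (ordS i) j x.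
Proof. by move=> ij; case: (hi ij x) => _ [-> _]. Qed.
Lemma hD i j x : i != j -> D i j x = B (ordS i) j x.
Proof.
move=> ij; case: (hi ij x) => _ [e1 e2].
by apply: oppr_inj; rewrite -e2 -e1.
Qed.

Lemma sum4 (F1 F2 F3 F4 : 'I_N -> 'I_N -> R) :
  \sum_(i < N) \sum_(j < N) (F1 i j - F2 i j + F3 i j - F4 i j) =
  \sum_(i < N) \sum_(j < N) F1 i j - \sum_(i < N) \sum_(j < N) F2 i j
  + \sum_(i < N) \sum_(j < N) F3 i j - \sum_(i < N) \sum_(j < N) F4 i j.
Proof.
under eq_bigr do rewrite sumrB big_split sumrB.
by rewrite sumrB big_split sumrB.
Qed.

Lemma reidx2 (F : 'I_N -> 'I_N -> R) (f g : 'I_N -> 'I_N) :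
  injective f -> injective g ->
  \sum_(i < N) \sum_(j < N) F i j = \sum_(i < N) \sum_(j < N) F (f i) (g j).
Proof.
move=> fi gi; rewrite (reindex_inj fi); apply: eq_bigr => i _.
by rewrite (reindex_inj gi).
Qed.

Lemma core1 (X Y X' Y' : 'I_N -> 'rV[R]_m) (J : 'I_N) :
  (forall j, j != J -> Y (ordS j) = X j) -> (forall j, j != J -> Y' (ordS j) = X' j) ->
  \sum_(i < N) \sum_(j < N)
    (form (A i j (Y j)) (Y' i) - form (D i j (X j)) (X' i)
     + form (B i j (X j)) (Y' i) - form (C i j (Y j)) (X' i))
  = form (A (ordS J) (ordS J) (Y (ordS J))) (Y' (ordS J)) - form (D J J (X J)) (X' J)
    + form (B (ordS J) J (X J)) (Y' (ordS J)) - form (C J (ordS J) (Y (ordS J))) (X' J).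
Proof.
move=> hY hY'.
rewrite (sum4 (fun i j => form (A i j (Y j)) (Y' i)) (fun i j => form (D i j (X j)) (X' i))
   (fun i j => form (B i j (X j)) (Y' i)) (fun i j => form (C i j (Y j)) (X' i))).
rewrite (reidx2 (fun i j => form (A i j (Y j)) (Y' i)) (@ordS_inj N) (@ordS_inj N)).
rewrite (reidx2 (fun i j => form (B i j (X j)) (Y' i)) (@ordS_inj N) (@inj_id _)).
rewrite (reidx2 (fun i j => form (C i j (Y j)) (X' i)) (@inj_id _) (@ordS_inj N)).
rewrite -sum4.
pose T i j := form (A (ordS i) (ordS j) (Y (ordS j))) (Y' (ordS i)) - form (D i j (X j)) (X' i)
     + form (B (ordS i) j (X j)) (Y' (ordS i)) - form (C i (ordS j) (Y (ordS j))) (X' i).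
have Tz : forall i j, (i != J) || (j != J) -> T i j = 0.
  move=> i j; rewrite /T.
  have [iJ|iJ] := eqVneq i J; have [jJ|jJ] := eqVneq j J => //= _.
  -
    subst i; have Jj : J != j by rewrite eq_sym.
    rewrite hY // (hA _ Jj) (hC _ Jj) (hD _ Jj) !(fNl hF); ring.
  -
    subst j; have iJ' := iJ.
    rewrite hY' // (hA _ iJ) (hC _ iJ) (hD _ iJ) !(fNl hF); ring.
  -
    rewrite hY // hY' //.
    have [ij|ij] := eqVneq i j.
      subst j; have := congr1 (fun z => form z (X' i)) (hii i (X i)).
      by rewrite /= !(fBl hF) (fDl hF) !(fBl hF) (f0l hF).
    rewrite (hA _ ij) (hC _ ij) (hD _ ij) !(fNl hF); ring.
transitivity (\sum_(i < N) \sum_(j < N) T i j); first by [].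
rewrite (bigD1 J) //= (bigD1 J) //= big1 ?addr0; last first.
  by move=> j jJ; apply: Tz; rewrite jJ orbT.
rewrite big1 ?addr0 // => i iJ; apply: big1 => j _; apply: Tz; by rewrite iJ.
Qed.


Lemma core2 (X Y : 'I_N -> 'rV[R]_m) (U G : 'M[R]_(N, m)) :
  (forall j, Y (ordS j) = X j) ->
  let L j := A (ordS j) (ordS j) (X j) + B (ordS j) j (X j) in
  \sum_(i < N) \sum_(j < N)
    (form (A i j (Y j)) (mul (row i G) (row i U)) - form (D i j (X j)) (mul (row i U) (row i G))
     + form (B i j (X j)) (mul (row i G) (row i U)) - form (C i j (Y j)) (mul (row i U) (row i G)))
  = formn form G (\matrix_(j < N, l < m) (mul (row j U) (L (ord_pred j)) - mul (L j) (row j U)) 0 l).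
Proof.
move=> hY L.
rewrite /formn; apply: eq_bigr => i _.
set e' := mul (row i G) (row i U); set e := mul (row i U) (row i G).
have rowM : row i (\matrix_(j < N, l < m) (mul (row j U) (L (ord_pred j)) - mul (L j) (row j U)) 0 l)
   = mul (row i U) (L (ord_pred i)) - mul (L i) (row i U) by apply/rowP => l; rewrite !mxE.
rewrite rowM (fBr hF) (finv2 hF) (frot hF) -/e' -/e (fC hF e') (fC hF e).
have SA : \sum_(j < N) form (A i j (Y j)) e' + \sum_(j < N) form (B i j (X j)) e'
    = form (L (ord_pred i)) e'.
  rewrite (reindex_inj (@ordS_inj N)) /= -big_split /=.
  under eq_bigr do rewrite hY.
  have ip : i = ordS (ord_pred i) by rewrite ord_predK.
  rewrite (bigD1 (ord_pred i)) //= big1 ?addr0.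
    by rewrite /L -ip (fDl hF).
  move=> j jp; rewrite [in A i _]ip [in B i _]ip.
  have pj : ord_pred i != j by rewrite eq_sym.
  by rewrite (hA _ pj) (fNl hF) addNr.
have SD : \sum_(j < N) form (D i j (X j)) e + \sum_(j < N) form (C i j (Y j)) e
    = form (L i) e.
  rewrite [X in _ + X](reindex_inj (@ordS_inj N)) /= -big_split /=.
  under eq_bigr do rewrite hY.
  rewrite (bigD1 i) //= big1 ?addr0.
    have h := congr1 (fun z => form z e) (hii i (X i)).
    rewrite /= !(fBl hF) (fDl hF) !(fBl hF) (f0l hF) in h.
    rewrite /L (fDl hF); lra.
  move=> j ji; have ij : i != j by rewrite eq_sym.
  by rewrite (hD _ ij) (hC _ ij) (fNl hF) addrN.
rewrite (_ : \sum_(j < N) _ = \sum_(j < N) form (A i j (Y j)) e' - \sum_(j < N) form (D i j (X j)) e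
   + \sum_(j < N) form (B i j (X j)) e' - \sum_(j < N) form (C i j (Y j)) e); last first.
  by rewrite -sumrB -big_split -sumrB.
rewrite -SA -SD; lra.
Qed.

End Core.

Section Swap.
Context {R : realType} {m : nat} (mul : 'rV[R]_m -> 'rV[R]_m -> 'rV[R]_m)
  (one : 'rV[R]_m) (form : 'rV[R]_m -> 'rV[R]_m -> R).
Hypothesis hF : frobenius_setting mul one form.
Local Open Scope classical_set_scope.

Definition Lmat (q : 'rV[R]_m) : 'M[R]_m := \matrix_(i, j) (mul q 'e_i) 0 j.

Lemma Lmat_mul q x : x *m Lmat q = mul q x.
Proof.
rewrite [RHS](_ : _ = mul q (\sum_(i < m) x 0 i *: 'e_i)); last by rewrite -row_sum_delta.
rewrite (lin_sum _ _ (mLr hF q)); apply/rowP => j; rewrite !mxE summxE.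
by apply: eq_bigr => i _; rewrite (mZr hF) !mxE.
Qed.

Lemma unit_inv a : Lmat a \in unitmx -> exists b, mul a b = one /\ mul b a = one.
Proof.
move=> ua; pose b := one *m invmx (Lmat a).
have ab : mul a b = one by rewrite -Lmat_mul /b mulmxKV.
have ub : Lmat b \in unitmx.
  apply: inj_unit => v; rewrite Lmat_mul => bv.
  by rewrite -(m1l hF v) -ab -(mA hF) bv (m0r hF).
pose k := one *m invmx (Lmat b).
have bk : mul b k = one by rewrite -Lmat_mul /k mulmxKV.
exists b; split => //.
have -> : a = k by rewrite -(m1r hF a) -bk (mA hF) ab (m1l hF).
exact: bk.
Qed.

Lemma near_unit q : \forall t \near (0 : R)^', Lmat (q + t *: one) \in unitmx.
Proof.
pose M := Lmat q.
have LE : forall t : R, Lmat (q + t *: one) = M - (- t)%:M.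
  move=> t; apply/matrixP => i j; rewrite !mxE (mDl hF) (mZl hF) (m1l hF) !mxE.
  by rewrite mulNrn opprK eqxx /= eq_sym mulr_natr.
pose p := char_poly M.
have p0 : p != 0 by apply: monic_neq0; apply: char_poly_monic.
have [k [q1 hq1 pe]] := multiplicity_XsubC p 0.
rewrite p0 /= in hq1.
have q10 : 0 < `|q1.[0]| by rewrite normr_gt0.
have := @continuous_horner R q1 0 => /cvgrPdist_lt /(_ _ q10) /nbhs_ballP [d d0 Hd].
near=> t.
have t0 : t != 0 by near: t; exact: nbhs_dnbhs_neq.
have tl : `|t| < d by near: t; exact: dnbhs0_lt.
have qt : q1.[- t] != 0.
  apply/negP => /eqP e.
  have : `|q1.[0] - q1.[- t]| < `|q1.[0]|.
    by apply: Hd; rewrite -ball_normE /= sub0r opprK.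
  by rewrite e subr0 ltxx.
rewrite LE -row_free_unit -kermx_eq0.
have : ~~ eigenvalue M (- t).
  rewrite eigenvalue_root_char -/p /root pe hornerM horner_exp hornerXsubC subr0.
  by rewrite mulf_eq0 negb_or qt expf_neq0 // oppr_eq0.
by rewrite /eigenvalue /eigenspace negbK.
Unshelve. all: by end_near.
Qed.

Lemma swap (phi : 'rV[R]_m -> R) : continuous (phi : _ -> R^o) ->
  Ad_invariant mul one phi -> forall P Q, phi (mul Q P) = phi (mul P Q).
Proof.
move=> pc hAd P Q.
pose g1 := fun t : R => (phi (t *: P + mul Q P) : R^o).
pose g2 := fun t : R => (phi (t *: P + mul P Q) : R^o).
have eq12 : \forall t \near (0 : R)^', g1 t = g2 t.
  move: (near_unit Q); apply: filter_app; near=> t => /unit_inv [b [hb bh]].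
  have := hAd (mul P (Q + t *: one)) (Q + t *: one) b hb bh.
  rewrite (mA hF) -(mA hF _ _ b) hb (m1r hF).
  rewrite /g1 /g2 (mDl hF) (mZl hF) (m1l hF) (mDr hF) (mZr hF) (m1r hF).
  by rewrite !(addrC (t *: P)).
have gc : forall c : 'rV[R]_m, continuous (fun t : R => (phi (t *: P + c) : R^o)).
  move=> c t; apply: continuous_comp; last exact: pc.
  apply: cvgD; [exact: scalel_continuous | exact: cvg_cst].
have c1 : g1 t @[t --> (0 : R)^'] --> g1 0 by apply/continuous_withinNx; exact: gc.
have c2 : g2 t @[t --> (0 : R)^'] --> g2 0 by apply/continuous_withinNx; exact: gc.
have c1' : g2 t @[t --> (0 : R)^'] --> g1 0.
  apply: cvg_trans c1; apply: near_eq_cvg; near=> t; by near: t.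
have := cvg_lim (@Rhausdorff R) c1'; rewrite (cvg_lim (@Rhausdorff R) c2).
by rewrite /g1 /g2 !scale0r !add0r => ->.
Unshelve. all: by end_near.
Qed.

End Swap.

Lemma lin_derive {R : realType} p q (f : 'M[R]_(p, q) -> R) U X :
  (forall (a : R) u v, f (a *: u + v) = a * f u + f v) -> 'D_X (f : _ -> R^o) U = f X.
Proof.
move=> hf.
have hf' : forall (a : R) u v, (f : _ -> R^o) (a *: u + v) = a *: (f : _ -> R^o) u + f v by [].
pose fL : {linear 'M[R]_(p, q) -> R^o} := HB.pack (f : _ -> R^o) (GRing.isLinear.Build _ _ _ _ (f : _ -> R^o) hf').
have -> : (f : _ -> R^o) = fL by [].
rewrite deriveE; last exact: (lin_diff _ hf').
by rewrite diff_lin //; exact: (lin_mx_cont hf').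
Qed.

Section Cyc.
Context {R : realType} {m : nat} (mul : 'rV[R]_m -> 'rV[R]_m -> 'rV[R]_m)
  (one : 'rV[R]_m) (form : 'rV[R]_m -> 'rV[R]_m -> R).
Hypothesis hF : frobenius_setting mul one form.

Lemma comm_grad (phi : 'rV[R]_m -> R) : Ck 1 phi -> Ad_invariant mul one phi ->
  forall x, mul (grad form phi x) x = mul x (grad form phi x).
Proof.
move=> c1 hAd x.
have pc : continuous (phi : _ -> R^o) by case: c1.
apply: (form_eq hF) => Z.
rewrite -(finv2 hF) -(frot hF) !(grad_phi hF _ c1).
apply: derive_ext => h.
have := swap hF pc hAd (one + h *: Z) x.
by rewrite (mDr hF) (mZr hF) (m1r hF) (mDl hF) (mZl hF) (m1l hF) !(addrC x).
Qed.

Context {n' : nat}.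
Local Notation N := n'.+1.

Lemma cyc1 (phi : 'rV[R]_m -> R) : continuous (phi : _ -> R^o) -> Ad_invariant mul one phi ->
  forall W : 'M[R]_(N, m), phi (Mprod mul one (sigma W)) = phi (Mprod mul one W).
Proof.
move=> pc hAd W.
pose s' := map (fun i => row (lift ord0 i) W) (enum 'I_n').
have e1 : Mprod mul one W = mul (Fl mul one s') (row 0 W).
  by rewrite (Mprod_rows mul one) /rows enum_ordSl /= -map_comp.
have e2 : Mprod mul one (sigma W) = mul (row 0 W) (Fl mul one s').
  rewrite (Mprod_rows mul one) /rows enum_ordSr map_rcons -cats1 (Fl_cat hF) /= (m1l hF).
  rewrite -map_comp.
  have -> : row ord_max (sigma W) = row 0 W.
    apply/rowP => l; rewrite !mxE; congr (W _ l); apply: val_inj => /=.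
    by rewrite modnn.
  congr (mul _ (Fl mul one _)); apply: eq_map => i /=.
  apply/rowP => l; rewrite !mxE; congr (W _ l); apply: val_inj => /=.
  by rewrite modn_small // ltnS.
by rewrite e1 e2 (swap hF pc hAd).
Qed.

Lemma cyc (phi : 'rV[R]_m -> R) : continuous (phi : _ -> R^o) -> Ad_invariant mul one phi ->
  forall r (V : 'M[R]_(N, m)), phi (Mprod mul one (iter r (@sigma R N m) V)) = phi (Mprod mul one V).
Proof.
move=> pc hAd; elim => [|r IH] V //=.
by rewrite cyc1 // IH.
Qed.

End Cyc.

End Helpers.
Import Helpers.

Theorem theorem1 (R : realType) (m n : nat) (hn : (0 < n)%N)
  (mul : 'rV[R]_m -> 'rV[R]_m -> 'rV[R]_m) (one : 'rV[R]_m)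
  (form : 'rV[R]_m -> 'rV[R]_m -> R)
  (A B C D : 'I_n -> 'I_n -> {linear 'rV[R]_m -> 'rV[R]_m}) :
  frobenius_setting mul one form ->
  (forall i j, is_adjoint form (A i j) (fun x => - A j i x)) ->
  (forall i j, is_adjoint form (D i j) (fun x => - D j i x)) ->
  (forall i j, is_adjoint form (B i j) (C j i)) ->
  is_Poisson (PBn mul form (fun i j => A i j) (fun i j => B i j)
                (fun i j => C i j) (fun i j => D i j)) ->
  (* (i) *)
  (forall i j : 'I_n, i != j ->
     forall x, A (ordS i) (ordS j) x = - B (ordS i) j x
            /\ - B (ordS i) j x = C i (ordS j) x
            /\ C i (ordS j) x = - D i j x) ->
  (* (ii) *)
  (forall j : 'I_n, forall x,
     A (ordS j) (ordS j) x - D j j x + B (ordS j) j x - C j (ordS j) x = 0) ->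
  (* (1): ordinal j stands for the paper's index j+1, ordS j for j+2 *)
  (forall (j : 'I_n) (phi psi : 'rV[R]_m -> R),
     smooth phi -> smooth psi ->
     forall U : 'M[R]_(n, m),
       PBn mul form (fun i k => A i k) (fun i k => B i k)
           (fun i k => C i k) (fun i k => D i k)
           (fun V => phi (Mprod mul one (iter j.+1 (@sigma R n m) V)))
           (fun V => psi (Mprod mul one (iter j.+1 (@sigma R n m) V))) U
       = PB mul form (A (ordS j) (ordS j)) (B (ordS j) j) (C j (ordS j)) (D j j)
           phi psi (Mprod mul one (iter j.+1 (@sigma R n m) U)))
  /\
  (* (2) *)
  (forall phi : 'rV[R]_m -> R, smooth phi -> Ad_invariant mul one phi ->
     let T (U : 'M[R]_(n, m)) (j : 'I_n) := Mprod mul one (iter j.+1 (@sigma R n m) U) in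
     let L (U : 'M[R]_(n, m)) (j : 'I_n) :=
       A (ordS j) (ordS j) (mul (T U j) (grad form phi (T U j)))
       + B (ordS j) j (mul (T U j) (grad form phi (T U j))) in
     forall (U : 'M[R]_(n, m)) (ell : 'M[R]_(n, m) -> R),
       (forall (a : R) X Y, ell (a *: X + Y) = a * ell X + ell Y) ->
       PBn mul form (fun i k => A i k) (fun i k => B i k)
           (fun i k => C i k) (fun i k => D i k)
           (fun V => phi (Mprod mul one V)) ell U
       = ell (\matrix_(j < n, l < m)
                (mul (row j U) (L U (ord_pred j)) - mul (L U j) (row j U)) 0 l)).
Proof.
move=> hF _ _ _ _.
case: n hn A B C D => [//|n'] _ A B C D hi hii.
split.
- move=> j phi psi sphi spsi U.
  have c1 := sphi 1%N; have c1' := spsi 1%N.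
  have [r1 r2 r3] := rel hF c1 j U.
  have [s1 s2 s3] := rel hF c1' j U.
  rewrite -/(Phi mul one phi j.+1) -/(Phi mul one psi j.+1) /PBn /=.
  rewrite (core1 hF hi hii (J := j)) ?r3 ?s3 ?r2 ?s2 //.
  all: try by move=> k hk; rewrite ?s1 ?r1.
- move=> phi sphi hAd T L U ell hell.
  have c1 := sphi 1%N.
  have [pc _ _] := c1.
  have eqPhi : forall j : 'I_(n'.+1),
      (fun V : 'M[R]_(n'.+1, m) => phi (Mprod mul one V)) = Phi mul one phi j.+1.
    move=> j; rewrite /Phi; apply: boolp.funext => V /=.
    by rewrite (cyc hF pc hAd j.+1).
  set Gp := grad (formn form) (fun V => phi (Mprod mul one V)) U.
  have HX : forall j, mul (row j U) (row j Gp) = mul (T U j) (grad form phi (T U j)).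
    by move=> j; have [_ r2 _] := rel hF c1 j U; rewrite /Gp (eqPhi j) r2.
  have HY : forall j, mul (row (ordS j) Gp) (row (ordS j) U) = mul (row j U) (row j Gp).
    move=> j; have [_ r2 r3] := rel hF c1 j U.
    by rewrite /Gp (eqPhi j) r3 r2 (comm_grad hF c1 hAd).
  have hell' : forall (a : R) u v, (ell : _ -> R^o) (a *: u + v) = a *: (ell : _ -> R^o) u + ell v.
    exact: hell.
  have gell : forall Z, formn form (grad (formn form) ell U) Z = ell Z.
    move=> Z; rewrite (grad_n hF (lin_diff U hell')).
    exact: lin_derive.
  rewrite /PBn /= -/Gp.
  rewrite (core2 hF hi hii (Y := fun j => mul (row j Gp) (row j U))); last exact: HY.
  rewrite gell; congr (ell _); apply/matrixP => a b; rewrite !mxE.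
  by rewrite /L !HX.
Qed.
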